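(* Let $k\ge 2$ and let $\mathcal{C}$ be an optimum distance full flag code on $\mathbb{F}_q^{2k}$. Then $|\mathcal{C}|\le q^k+1$, with equality if and only if the $k$-projected code $\mathcal{C}_k$ is a $k$-spread of $\mathbb{F}_q^{2k}$.
   Context: $q$ is a prime power. For subspaces $\mathcal{U},\mathcal{V}$, $d_S(\mathcal{U},\mathcal{V})=\dim(\mathcal{U}+\mathcal{V})-\dim(\mathcal{U}\cap\mathcal{V})$. A full flag on $\mathbb{F}_q^{2k}$ is a tuple $(\mathcal{F}_1,\ldots,\mathcal{F}_{2k-1})$ of subspaces with $\mathcal{F}_1\subsetneq\cdots\subsetneq\mathcal{F}_{2k-1}$ and $\dim\mathcal{F}_i=i$; a full flag code is a set of at least two full flags, with distance $d_f(\mathcal{C})=\min_{\mathcal{F}\ne\mathcal{F}'}\sum_i d_S(\mathcal{F}_i,\mathcal{F}'_i)$; it is an optimum distance full flag code if $d_f(\mathcal{C})=2k^2$ (the maximum possible value). The $k$-projected code is $\mathcal{C}_k=\{\mathcal{F}_k:\mathcal{F}\in\mathcal{C}\}$. A $k$-spread of $\mathbb{F}_q^{2k}$ is a set of $k$-dimensional subspaces pairwise intersecting trivially, of cardinality $q^k+1$. *)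

(* Defs.v *)
From HB Require Import structures.
From mathcomp Require Import all_boot all_order all_algebra all_field.
Set Implicit Arguments. Unset Strict Implicit. Unset Printing Implicit Defensive.
Import GRing.Theory.
Local Open Scope ring_scope.

Section FlagCodes.
Variables (F : finFieldType) (n : nat).

Notation V := ('rV[F]_n).
Notation sub := {vspace V}.

Definition subspace_dist (U W : sub) : nat :=
  (\dim (U + W)%VS - \dim (U :&: W)%VS)%N.

(* A (candidate) flag: F_1, ..., F_{n-1}, with F_{i+1} stored at index i. *)
Definition flag := {ffun 'I_n.-1 -> sub}.

Definition is_full_flag (f : flag) : Prop :=
  (forall i : 'I_n.-1, \dim (f i) = i.+1) /\
  (forall i j : 'I_n.-1, j = i.+1 :> nat -> (f i <= f j)%VS /\ f i != f j).

(* the subspace F_i of a flag (1-based index); 0 outside the range *)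
Definition flag_at (f : flag) (i : nat) : sub :=
  if insub i.-1 is Some j then f j else 0%VS.

Definition flag_dist (f g : flag) : nat :=
  (\sum_(i < n.-1) subspace_dist (f i) (g i))%N.

Definition is_full_flag_code (C : seq flag) : Prop :=
  uniq C /\ (2 <= size C)%N /\ (forall f, f \in C -> is_full_flag f).

Definition code_min_dist_eq (C : seq flag) (d : nat) : Prop :=
  (exists f g, [/\ f \in C, g \in C, f != g & flag_dist f g = d]) /\
  (forall f g, f \in C -> g \in C -> f != g -> (d <= flag_dist f g)%N).

Definition projected_code (C : seq flag) (i : nat) : seq sub :=
  undup [seq flag_at f i | f <- C].

Definition is_spread (k : nat) (S : seq sub) : Prop :=
  uniq S /\ (forall U, U \in S -> \dim U = k) /\
  (forall U W, U \in S -> W \in S -> U != W -> (U :&: W)%VS = 0%VS) /\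
  size S = (#|F| ^ k).+1.

End FlagCodes.

Definition is_optimum_full_flag_code (F : finFieldType) (k : nat)
  (C : seq (flag F (2 * k)%N)) : Prop :=
  is_full_flag_code C /\ code_min_dist_eq C (2 * k ^ 2)%N.

(* Main.v *)
Require Import Defs.
From HB Require Import structures.
From mathcomp Require Import all_boot all_order all_algebra all_field.
From mathcomp Require Import zify.
Import GRing.Theory.

Lemma tri m : 2 * (\sum_(0 <= i < m) i.+1) = m * m.+1.
Proof.
elim: m => [|m IH]; first by rewrite big_geq.
rewrite big_nat_recr //= mulnDr IH; lia.
Qed.

Lemma tri_rev m : \sum_(0 <= i < m) (m - i) = \sum_(0 <= i < m) i.+1.
Proof.
rewrite big_nat_rev /=; apply: eq_big_nat => i /andP[_ Hi]; lia.
Qed.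

Lemma sum_min k : \sum_(i < (2*k).-1) minn i.+1 (2*k - i.+1) = k * k.
Proof.
case: k => [|k]; first by rewrite big_ord0.
rewrite -(big_mkord xpredT (fun i => minn i.+1 (2*k.+1 - i.+1))).
have -> : (2 * k.+1).-1 = k + k.+1 by lia.
rewrite (big_cat_nat _ (n:=k.+1)); [|by []|by lia].
rewrite (eq_big_nat _ _ (F2 := fun i => i.+1)); last by move=> i /andP[_ Hi]; lia.
have E : \sum_(k.+1 <= i < k + k.+1) minn i.+1 (2 * k.+1 - i.+1) = \sum_(0 <= i < k) (k - i).
  rewrite -{1}[k.+1]add0n big_addn.
  have -> : k + k.+1 - k.+1 = k by lia.
  by apply: eq_big_nat => i /andP[_ Hi]; lia.
rewrite E.
rewrite tri_rev big_nat_recr //=.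
have := tri k; lia.
Qed.

Lemma dist_le (F : finFieldType) n (U W : {vspace 'rV[F]_n}) m :
  \dim U = m -> \dim W = m -> (subspace_dist U W <= 2 * minn m (n - m))%N.
Proof.
move=> dU dW; rewrite /subspace_dist.
have h1 := dimv_sum_cap U W.
have h2 : (\dim (U :&: W) <= \dim U)%N by apply: dimvS; apply: capvSl.
have h3 : (\dim (U + W) <= n)%N.
  have := dimvS (subvf (U + W)); rewrite dimvf /dim /= mul1n; done.
lia.
Qed.

Lemma card_nz (F : finFieldType) n (U : {vspace 'rV[F]_n}) :
  #|[set v | (v \in U) && (v != 0%R)]| = (#|F| ^ \dim U).-1.
Proof.
have H := cardsD1 (0%R : 'rV[F]_n) [set v in U].
rewrite inE mem0v add1n cardsE in H.
rewrite -card_vspace H /=.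
apply: eq_card => v; rewrite !inE andbC; done.
Qed.

Lemma pspread (F : finFieldType) n k (S : seq {vspace 'rV[F]_n}) :
  uniq S -> (forall U, U \in S -> \dim U = k) ->
  (forall U W, U \in S -> W \in S -> U != W -> (U :&: W)%VS = 0%VS) ->
  (size S * (#|F| ^ k).-1 <= (#|F| ^ n).-1)%N.
Proof.
pose A (U : {vspace 'rV[F]_n}) := [set v | (v \in U) && (v != 0%R)].
have Hc : forall S : seq {vspace 'rV[F]_n}, uniq S -> (forall U, U \in S -> \dim U = k) ->
  (forall U W, U \in S -> W \in S -> U != W -> (U :&: W)%VS = 0%VS) ->
  #|\bigcup_(U <- S) A U| = (size S * (#|F| ^ k).-1)%N.
  elim=> [|U S' IH]; first by rewrite big_nil cards0.
  move=> /= /andP[US' uS'] Hd Hp.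
  rewrite big_cons cardsU IH //; last first.
  - by move=> X W XS WS; apply: Hp; rewrite inE ?XS ?WS orbT.
  - by move=> X XS; apply: Hd; rewrite inE XS orbT.
  have -> : A U :&: \bigcup_(j <- S') A j = set0.
    apply/setP => v; rewrite !inE; apply/negbTE/negP => /andP[/andP[vU v0]].
    have Hm : forall T : seq {vspace 'rV[F]_n}, v \in \bigcup_(j <- T) A j -> exists2 W, W \in T & v \in A W.
      elim=> [|X T IHT]; first by rewrite big_nil inE.
      rewrite big_cons inE => /orP[vX|/IHT[W WT vW]]; first by exists X; rewrite ?mem_head.
      by exists W; rewrite // inE WT orbT.
    move=> /Hm[W WS']; rewrite inE => /andP[vW _].
    have UW : U != W by apply: contraNneq US' => ->.
    have WS : W \in U :: S' by rewrite inE WS' orbT.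
    have E := Hp U W (mem_head _ _) WS UW. have : v \in (U :&: W)%VS by rewrite memv_cap vU vW.
    by rewrite E memv0 (negbTE v0).
  rewrite cards0 subn0 card_nz Hd ?mem_head //= mulSn //.
move=> uS Hd Hp; rewrite -(Hc S uS Hd Hp).
have -> : (#|F| ^ n).-1 = #|[set~ (0%R : 'rV[F]_n)]|.
  by rewrite cardsC1 card_mx mul1n.
apply: subset_leq_card; apply/subsetP => v.
elim: (S) => [|X T IHT]; first by rewrite big_nil inE.
by rewrite big_cons inE => /orP[|/IHT //]; rewrite !inE => /andP[_ ->].
Qed.

Theorem theorem4p5 (F : finFieldType) (k : nat) (C : seq (flag F (2 * k))) :
  (2 <= k)%N -> is_optimum_full_flag_code C ->
  (size C <= (#|F| ^ k).+1)%N /\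
  (size C = (#|F| ^ k).+1 <-> is_spread k (projected_code C k)).
Proof.
move=> k2 [[uC [sz2 Hfull]] [_ Hmin]].
have i0lt : (k.-1 < (2 * k).-1)%N by lia.
pose i0 : 'I_(2 * k).-1 := Ordinal i0lt.
have Hat : forall f : flag F (2 * k), flag_at f k = f i0.
  move=> f; rewrite /flag_at; case: insubP => [j _ vj|]; last by rewrite i0lt.
  by congr (f _); apply: val_inj.
have Hdim : forall f, f \in C -> \dim (f i0) = k.
  by move=> f fC; have [-> _] := Hfull f fC => /=; lia.
have Hkey : forall f g, f \in C -> g \in C -> f != g -> (f i0 :&: g i0)%VS = 0%VS.
  move=> f g fC gC fg.
  have Hd := Hmin f g fC gC fg; rewrite /flag_dist in Hd.
  have [Hdf _] := Hfull f fC; have [Hdg _] := Hfull g gC.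
  pose b (i : 'I_(2 * k).-1) := (2 * minn i.+1 (2 * k - i.+1))%N.
  pose t (i : 'I_(2 * k).-1) := subspace_dist (f i) (g i).
  have Hle : forall i, (t i <= b i)%N by move=> i; apply: dist_le.
  have Hsb : (\sum_i b i = 2 * (k * k))%N by rewrite -big_distrr sum_min.
  have Hs : (\sum_i (b i - t i) + \sum_i t i = \sum_i b i)%N.
    rewrite -big_split; apply: eq_bigr => i _; exact: subnK (Hle i).
  have H0 : (\sum_i (b i - t i) == 0)%N.
    have Hd' : (2 * (k * k) <= \sum_i t i)%N by move: Hd; rewrite expnS expn1.
    rewrite Hsb in Hs; apply/eqP; move: Hd' Hs.
    set X := \sum_i (b i - t i); set Y := \sum_i t i; lia.
  move: H0; rewrite sum_nat_eq0 => /forallP /(_ i0) /=; rewrite subn_eq0 /b /t /subspace_dist /=.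
  have h1 := dimv_sum_cap (f i0) (g i0).
  rewrite Hdf Hdg /= in h1.
  move=> H; apply/eqP; rewrite -dimv_eq0; apply/eqP; move: H h1; lia.
have Hinj : {in C &, injective (fun f : flag F (2 * k) => f i0)}.
  move=> f g fC gC /= E; apply/eqP; apply/negP => /negP fg.
  have := Hkey f g fC gC fg; rewrite E capvv => E0.
  by have := Hdim g gC; rewrite E0 dimv0; lia.
have Hproj : projected_code C k = [seq f i0 | f : flag F (2 * k) <- C].
  rewrite /projected_code (eq_map Hat) undup_id //.
  by rewrite map_inj_in_uniq.
have Hsz : size (projected_code C k) = size C by rewrite Hproj size_map.
have Hu : uniq (projected_code C k) by rewrite Hproj map_inj_in_uniq.
have Hd2 : forall U, U \in projected_code C k -> \dim U = k.
  by move=> U; rewrite Hproj => /mapP[f fC ->]; apply: Hdim.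
have Hp2 : forall U W, U \in projected_code C k -> W \in projected_code C k ->
    U != W -> (U :&: W)%VS = 0%VS.
  move=> U W; rewrite Hproj => /mapP[f fC ->] /mapP[g gC ->] fg.
  by apply: Hkey => //; apply: contraNneq fg => ->.
have Hb := @pspread F (2 * k) k _ Hu Hd2 Hp2.
rewrite Hsz in Hb.
have q1 := finNzRing_gt1 F.
have x1 : (1 < #|F| ^ k)%N.
  by rewrite -(exp1n k) ltn_exp2r //; lia.
split.
  have : (size C * (#|F| ^ k).-1 <= (#|F| ^ k).+1 * (#|F| ^ k).-1)%N.
    apply: (leq_trans Hb); have -> : (#|F| ^ (2 * k) = (#|F| ^ k) ^ 2)%N by rewrite -expnM mulnC.
    move: x1; set x := (#|F| ^ k)%N => x1.
    have -> : (x ^ 2 = x * x)%N by rewrite expnS expn1.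
    nia.
  by rewrite leq_pmul2r //; lia.
split.
  by move=> E; split=> //; split=> //; split=> //; rewrite Hsz.
by move=> [_ [_ [_ E]]]; rewrite -Hsz.
Qed.
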